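(* Let $A\in\mathrm{GL}_{n}(\mathbb{Z})$ be irreducible and have an eigenvalue of absolute value $1$. Then the stable word length on $G=\mathbb{Z}^{n}\rtimes_{A}\mathbb{Z}$ (with respect to a finite generating set) is purely positive, i.e. it is positive on every element of infinite order.
   Context: $\mathbb{Z}^{n}\rtimes_{A}\mathbb{Z}$ is the semidirect product in which a generator of $\mathbb{Z}$ acts on $\mathbb{Z}^n$ by $A$. $A$ is irreducible if $\mathbb{Z}^n$ has no nonzero proper $A$-invariant subgroup $I$ with $\mathbb{Z}^n/I$ torsion-free (equivalently, $\mathbb{Q}^n$ has no nonzero proper $A$-invariant subspace). For a finite symmetric generating set $S$ with word length $|\cdot|_S$, the stable word length is $\mathrm{swl}_S(g)=\lim_{k\to\infty}|g^{k}|_S/k$. *)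

(* Defs.v *)
From HB Require Import structures.
From mathcomp Require Import all_boot all_order all_algebra all_field.
From mathcomp Require Import all_classical all_reals all_analysis.
Set Implicit Arguments. Unset Strict Implicit. Unset Printing Implicit Defensive.
Import Order.TTheory GRing.Theory Num.Theory numFieldNormedType.Exports.
Local Open Scope ring_scope.
Local Open Scope classical_set_scope.

Section SemiDirect.
Variables (n : nat) (A : 'M[int]_n).

(* A^k for k : int (A is assumed invertible over Z when used). *)
Definition Apow (k : int) : 'M[int]_n :=
  match k with
  | Posz m => A ^+ m
  | Negz m => (invmx A) ^+ m.+1
  end.

(* Elements of Z^n ⋊_A Z : pairs (v, k) standing for v t^k, where t is the
   generator of Z acting on Z^n (column vectors) by t v t^-1 = A v. *)
Definition G : Type := ('cV[int]_n * int)%type.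

Definition gmul (x y : G) : G := (x.1 + Apow x.2 *m y.1, x.2 + y.2).
Definition gone : G := (0, 0).
Definition ginv (x : G) : G := (- (Apow (- x.2) *m x.1), - x.2).
Definition gpow (g : G) (k : nat) : G := iter k (gmul g) gone.

Definition is_word (S : seq G) (g : G) (k : nat) : Prop :=
  exists s : seq G, [/\ size s = k, all (fun x => x \in S) s & foldr gmul gone s = g].

Definition gen_set (S : seq G) : Prop :=
  (forall x, x \in S -> ginv x \in S) /\ (forall g, exists k, is_word S g k).

(* word length |g|_S : least length of a word in S representing g (0 if none) *)
Definition wl (S : seq G) (g : G) : nat :=
  match pselect (exists k, `[< is_word S g k >]) with
  | left h => ex_minn h
  | right _ => 0%N
  end.

Definition swl (R : realType) (S : seq G) (g : G) : R :=
  lim ((fun k : nat => (wl S (gpow g k))%:R / k%:R : R) @ \oo).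

Definition infinite_order (g : G) : Prop := forall m : nat, (0 < m)%N -> gpow g m <> gone.

End SemiDirect.

(* A subspace of
   (column vectors) Q^n is encoded as the row space of W (rows = transposed vectors);
   A-invariance  A W ⊆ W  reads  W *m A^T ⊆ W  in row form. *)
Definition irreducible_mx (n : nat) (A : 'M[int]_n) : Prop :=
  forall W : 'M[rat]_n,
    (W *m (map_mx (fun x : int => x%:~R : rat) A)^T <= W)%MS ->
    (W == (0 : 'M[rat]_n))%MS \/ (W == (1%:M : 'M[rat]_n))%MS.

(* Main.v *)
Require Import Defs.
From HB Require Import structures.
From mathcomp Require Import all_boot all_order all_algebra all_field.
From mathcomp Require Import all_classical all_reals all_analysis.
Import Order.TTheory GRing.Theory Num.Theory numFieldNormedType.Exports.
Local Open Scope ring_scope.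

Local Open Scope classical_set_scope.
Lemma subadd_mul (a : nat -> nat) :
  (forall p q, (a (p + q) <= a p + a q)%N) ->
  forall q m r, (a (q * m + r) <= q * a m + a r)%N.
Proof.
move=> sa; elim=> [|q IH] m r; first by rewrite !mul0n !add0n.
rewrite mulSn -addnA; apply: leq_trans (sa _ _) _.
by rewrite mulSn -addnA leq_add2l IH.
Qed.

Lemma subadd_lin (a : nat -> nat) :
  (forall p q, (a (p + q) <= a p + a q)%N) -> a 0%N = 0%N ->
  forall r, (a r <= r * a 1%N)%N.
Proof.
move=> sa a0; elim=> [|r IH]; first by rewrite a0.
rewrite -addn1 mulnDl mul1n addnC; apply: leq_trans (sa _ _) _.
by rewrite addnC leq_add2r.
Qed.

Lemma fekete_pos (R : realType) (a : nat -> nat) (N : nat) :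
  (forall p q, (a (p + q) <= a p + a q)%N) -> a 0%N = 0%N -> (0 < N)%N ->
  (forall k, (k <= N * a k)%N) ->
  0 < lim ((fun k : nat => (a k)%:R / k%:R : R) @ \oo).
Proof.
move=> sa a0 N0 lb.
set u := fun k : nat => (a k)%:R / k%:R : R.
set E := [set x : R | exists2 k, (0 < k)%N & x = u k].
have Elb : lbound E (N%:R^-1).
  move=> _ [k k0 ->]; rewrite /u ler_pdivlMr ?ltr0n // mulrC ler_pdivrMr ?ltr0n //.
  by rewrite -natrM ler_nat mulnC lb.
have En : nonempty E by exists (u 1%N); exists 1%N.
have hE : has_lbound E by exists N%:R^-1.
have Linf : N%:R^-1 <= inf E by apply: lb_le_inf.
have Lpos : 0 < inf E by apply: lt_le_trans Linf; rewrite invr_gt0 ltr0n.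
suff cv : u @ \oo --> inf E by rewrite (cvg_lim _ cv).
apply/cvgrPdist_lt => eps eps0.
have [_ [m m0 ->] um] := inf_adherent (divr_gt0 eps0 (ltr0Sn _ 1%N)) (conj En hE).
near=> k.
have k0 : (0 < k)%N by near: k; exact: nbhs_infty_gt.
have ge : inf E <= u k by apply: ge_inf => //; exists k.
have kR : 0 < k%:R :> R by rewrite ltr0n.
have mR : 0 < m%:R :> R by rewrite ltr0n.
have key : u k <= u m + (m * a 1%N)%:R / k%:R.
  rewrite /u ler_pdivrMr // mulrDl divfK ?gt_eqF //.
  have h1 := @subadd_mul a sa (k %/ m) m (k %% m).
  rewrite -divn_eq in h1.
  have h2 := @subadd_lin a sa a0 (k %% m).
  have h3 : (a k <= k %/ m * a m + m * a 1)%N.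
    apply: leq_trans h1 _; rewrite leq_add2l; apply: leq_trans h2 _.
    by rewrite leq_mul2r ltnW ?ltn_pmod ?orbT.
  apply: le_trans (_ : ((k %/ m * a m)%:R + (m * a 1)%:R <= _)).
    by rewrite -natrD ler_nat.
  rewrite lerD2r natrM mulrC -mulrA; apply: ler_wpM2l; first by rewrite ler0n.
  by rewrite mulrC ler_pdivlMr // -natrM ler_nat leq_divM.
have small : (m * a 1%N)%:R / k%:R < eps / 2 :> R.
  rewrite ltr_pdivrMr // mulrC -ltr_pdivrMr ?divr_gt0 ?ltr0Sn //.
  near: k; exact: nbhs_infty_gtr.
rewrite distrC ger0_norm ?subr_ge0 //.
rewrite ltrBlDl; apply: le_lt_trans key _.
rewrite [eps]splitr addrA ltr_leD //.
by apply: ltW.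
Unshelve. all: end_near.
Qed.
Section Grp.
Variables (n : nat) (A : 'M[int]_n.+1).
Hypothesis uA : A \in unitmx.

Lemma ApowE k : Apow A k = A ^ k.
Proof.
case: k => m //=.
by rewrite /exprz -exprVn.
Qed.

Lemma ApowD a b : Apow A (a + b) = Apow A a *m Apow A b.
Proof. by rewrite !ApowE exprzDr // mulmxE. Qed.

Lemma Apow0 : Apow A 0 = 1%:M.
Proof. by []. Qed.

Lemma gmulA x y z : gmul A (gmul A x y) z = gmul A x (gmul A y z).
Proof.
rewrite /gmul /=; congr (_, _); last by rewrite addrA.
by rewrite ApowD mulmxDr !addrA mulmxA.
Qed.

Lemma gmul1 x : gmul A (gone n.+1) x = x.
Proof. by case: x => v k; rewrite /gmul /= expr0; rewrite mul1mx !add0r. Qed.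

Lemma gmulg1 x : gmul A x (gone n.+1) = x.
Proof. by case: x => v k; rewrite /gmul /= mulmx0 !addr0. Qed.

Lemma foldr_cat s t :
  foldr (gmul A) (gone n.+1) (s ++ t) =
  gmul A (foldr (gmul A) (gone n.+1) s) (foldr (gmul A) (gone n.+1) t).
Proof.
elim: s => [|x s IH] /=; first by rewrite gmul1.
by rewrite IH gmulA.
Qed.

Lemma gpowD g a b : gpow A g (a + b) = gmul A (gpow A g a) (gpow A g b).
Proof.
elim: a => [|a IH]; first by rewrite add0n /= gmul1.
by rewrite addSn /= IH gmulA.
Qed.

Lemma wlP S g : (exists k, is_word A S g k) ->
  is_word A S g (wl A S g) /\ forall k, is_word A S g k -> (wl A S g <= k)%N.
Proof.
move=> [k0 hk0]; rewrite /wl.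
case: pselect => [h|[]]; last by exists k0; apply/asboolP.
case: (ex_minnP h) => m /asboolP hm hmin; split => // k hk.
by apply: hmin; apply/asboolP.
Qed.

Lemma wl_sub S g a b : gen_set A S ->
  (wl A S (gpow A g (a + b)) <= wl A S (gpow A g a) + wl A S (gpow A g b))%N.
Proof.
move=> [_ gS].
have [[s1 [h1 a1 e1]] _] := wlP _ _ (gS (gpow A g a)).
have [[s2 [h2 a2 e2]] _] := wlP _ _ (gS (gpow A g b)).
have [_ mn] := wlP _ _ (gS (gpow A g (a + b))).
apply: mn; exists (s1 ++ s2); split.
- by rewrite size_cat h1 h2.
- by rewrite all_cat a1 a2.
- by rewrite foldr_cat e1 e2 gpowD.
Qed.

Lemma wl0 S g : gen_set A S -> wl A S (gpow A g 0) = 0%N.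
Proof.
move=> [_ gS]; have [_ mn] := wlP _ _ (gS (gpow A g 0)).
by apply/eqP; rewrite -leqn0; apply: mn; exists [::].
Qed.

End Grp.
Section Val.
Variables (n : nat) (A : 'M[int]_n.+1).
Hypothesis uA : A \in unitmx.
Variables (z : algC) (w : 'rV[algC]_n.+1).
Hypothesis z1 : `|z| = 1.
Hypothesis wn0 : w != 0.
Hypothesis wz : w *m map_mx (fun x : int => x%:~R : algC) A = z *: w.

Definition mC (M : 'M[int]_(n.+1, n.+1)) := map_mx (fun x : int => x%:~R : algC) M.
Definition vC (M : 'cV[int]_n.+1) := map_mx (fun x : int => x%:~R : algC) M.

Lemma mCM M N : mC (M *m N) = mC M *m mC N.
Proof. exact: (map_mxM (intr : {rmorphism int -> algC})). Qed.

Lemma vCM M v : vC (M *m v) = mC M *m vC v.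
Proof. exact: (map_mxM (intr : {rmorphism int -> algC})). Qed.

Lemma vCD u v : vC (u + v) = vC u + vC v.
Proof. exact: (map_mxD (intr : {rmorphism int -> algC})). Qed.

Lemma vC0 : vC 0 = 0.
Proof. exact: (map_mx0 (intr : {rmorphism int -> algC})). Qed.

Lemma mC1 : mC 1%:M = 1%:M.
Proof. exact: (map_mx1 (intr : {rmorphism int -> algC})). Qed.

Lemma wpow M c : w *m mC M = c *: w -> forall m, w *m mC (M ^+ m) = c ^+ m *: w.
Proof.
move=> h; elim=> [|m IH]; first by rewrite expr0 scale1r mC1 mulmx1.
by rewrite exprSr -mulmxE mCM mulmxA IH -scalemxAl h scalerA exprSr.
Qed.

Lemma z0 : z != 0.
Proof. by apply/eqP => z0; move: z1; rewrite z0 normr0 => /eqP; rewrite eq_sym oner_eq0. Qed.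

Lemma winv : w *m mC (invmx A) = z^-1 *: w.
Proof.
have e : mC A *m mC (invmx A) = 1%:M by rewrite -mCM mulmxV // mC1.
have : w *m mC A *m mC (invmx A) = w by rewrite -mulmxA e mulmx1.
rewrite wz -scalemxAl => /(congr1 (fun M => z^-1 *: M)).
by rewrite scalerA mulVf ?z0 // scale1r.
Qed.

Lemma wApow k : exists c, `|c| = 1 /\ w *m mC (Apow A k) = c *: w.
Proof.
case: k => m /=.
  by exists (z ^+ m); rewrite normrX z1 expr1n; split => //; apply: wpow.
exists (z^-1 ^+ m.+1); rewrite normrX normfV z1 invr1 expr1n; split => //.
by apply: wpow; apply: winv.
Qed.

Definition phi (u : 'cV[int]_n.+1) : algC := (w *m vC u) 0 0.

Lemma phiD u v : phi (u + v) = phi u + phi v.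
Proof. by rewrite /phi vCD mulmxDr mxE. Qed.

Lemma phi0 : phi 0 = 0.
Proof. by rewrite /phi vC0 mulmx0 mxE. Qed.

Lemma phiApow k u : `|phi (Apow A k *m u)| = `|phi u|.
Proof.
have [c [c1 hc]] := wApow k.
by rewrite /phi vCM mulmxA hc -scalemxAl mxE normrM c1 mul1r.
Qed.

Definition nu (x : G n.+1) : algC := `|phi x.1| + `|(x.2)%:~R : algC|.

Lemma nu_ge0 x : 0 <= nu x.
Proof. by rewrite addr_ge0. Qed.

Lemma nu_mul x y : nu (gmul A x y) <= nu x + nu y.
Proof.
case: x => x1 x2; case: y => y1 y2.
rewrite /nu /gmul /= phiD rmorphD /=.
apply: le_trans (lerD (ler_normD _ _) (ler_normD _ _)) _.
by rewrite phiApow addrACA.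
Qed.

Lemma nu_one : nu (gone n.+1) = 0.
Proof. by rewrite /nu /= phi0 normr0 add0r. Qed.

Lemma nu_mem (S : seq (G n.+1)) x : x \in S -> nu x <= \sum_(y <- S) nu y.
Proof.
elim: S => //= y S IH; rewrite in_cons big_cons => /orP[/eqP->|/IH h].
  by rewrite lerDl sumr_ge0 // => *; exact: nu_ge0.
by apply: le_trans h _; rewrite lerDr nu_ge0.
Qed.

Lemma nu_word (S : seq (G n.+1)) s :
  all (fun x => x \in S) s ->
  nu (foldr (gmul A) (gone n.+1) s) <= (size s)%:R * \sum_(y <- S) nu y.
Proof.
elim: s => [|x s IH] /=; first by rewrite nu_one mul0r.
move=> /andP[xS aS].
apply: le_trans (nu_mul _ _) _.
rewrite -[(size s).+1]addn1 natrD mulrDl mul1r addrC lerD //; first exact: IH.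
exact: nu_mem.
Qed.


Lemma trZ (c : algC) (M : 'rV[algC]_n.+1) : (c *: M)^T = c *: M^T.
Proof. by apply/matrixP => i j; rewrite !mxE. Qed.

Definition toQ := fun x : int => x%:~R : rat.
Definition Bq := (map_mx toQ A)^T.

Lemma mRQ m p (M : 'M[int]_(m, p)) :
  map_mx (ratr : {rmorphism rat -> algC}) (map_mx toQ M) =
  map_mx (fun x : int => x%:~R : algC) M.
Proof. by apply/matrixP => i j; rewrite !mxE rmorph_int. Qed.

Lemma keyK i (y : 'rV[rat]_n.+1) :
  map_mx (ratr : {rmorphism rat -> algC}) (y *m Bq ^+ i) *m w^T =
  z ^+ i *: (map_mx (ratr : {rmorphism rat -> algC}) y *m w^T).
Proof.
elim: i y => [|i IH] y; first by rewrite expr0 mulmx1 scale1r.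
rewrite exprS -mulmxE mulmxA IH map_mxM -map_trmx mRQ -mulmxA -trmx_mul wz trZ.
by rewrite -scalemxAr scalerA exprSr.
Qed.

Lemma phi_inj (irr : irreducible_mx A) v : phi v = 0 -> v = 0.
Proof.
move=> pv.
set x := (map_mx toQ v)^T.
set W : 'M[rat]_n.+1 := \matrix_(i < n.+1) (x *m Bq ^+ i).
have eS j : Bq ^+ j *m Bq = Bq ^+ j.+1 by rewrite exprSr mulmxE.
have inv : (W *m Bq <= W)%MS.
  apply/row_subP => i; rewrite row_mul rowK -mulmxA eS.
  case: (ltnP i.+1 n.+1) => [lt|ge].
    by rewrite -(rowK (fun i : 'I_n.+1 => x *m Bq ^+ i) (Ordinal lt)) row_sub.
  have -> : i.+1 = n.+1 by apply/eqP; rewrite eqn_leq ge ltn_ord.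
  have ch := Cayley_Hamilton Bq.
  set p := char_poly Bq in ch.
  have sp : size p = n.+2 by rewrite size_char_poly.
  have lp : p`_n.+1 = 1 by have /monicP := char_poly_monic Bq; rewrite lead_coefE sp.
  rewrite -[p]coefK poly_def sp linear_sum big_ord_recr /= in ch.
  rewrite horner_mxZ rmorphXn /= horner_mx_X lp scale1r in ch.
  move/eqP: ch; rewrite addrC addr_eq0 => /eqP ->.
  rewrite mulmxN -scaleN1r scalemx_sub // mulmx_sumr summx_sub // => j _.
  rewrite horner_mxZ rmorphXn /= horner_mx_X -scalemxAr scalemx_sub //.
  by rewrite -(rowK (fun i : 'I_n.+1 => x *m Bq ^+ i) j) row_sub.
have [W0|W1] := irr W inv.
  have : W = 0 by apply/eqP; rewrite -submx0; case/andP: W0.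
  move/(congr1 (row 0)); rewrite rowK expr0 mulmx1 row0 => /eqP.
  rewrite -trmx0 (inj_eq trmx_inj) => /eqP x0.
  apply/matrixP => i j; move/matrixP: x0 => /(_ i j); rewrite !mxE.
  by rewrite /toQ => /eqP; rewrite intr_eq0 => /eqP.
exfalso; move/negP: wn0; apply.
have : (1%:M <= W)%MS by case/andP: W1.
case/submxP => D eD.
have eDC := congr1 (map_mx (ratr : {rmorphism rat -> algC})) eD.
rewrite map_mx1 map_mxM in eDC.
have Z : map_mx (ratr : {rmorphism rat -> algC}) W *m w^T = 0.
  apply/row_matrixP => i; rewrite row_mul row0 -map_row rowK keyK.
  have -> : map_mx (ratr : {rmorphism rat -> algC}) x *m w^T = 0.
    rewrite /x -map_trmx mRQ -trmx_mul.
    have -> : w *m vC v = 0.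
      by apply/matrixP => a b; rewrite (ord1 a) (ord1 b) [RHS]mxE; apply: pv.
    exact: trmx0.
  by rewrite scaler0.
have : w^T = 0 by rewrite -[w^T]mul1mx eDC -mulmxA Z mulmx0.
by move/(congr1 trmx); rewrite trmxK trmx0 => ->.
Qed.

End Val.

Lemma gpow2 n (A : 'M[int]_n) g k : (gpow A g k).2 = g.2 *+ k.
Proof. by elim: k => [|k IH] //=; rewrite IH mulrS. Qed.

Lemma gpow1 n (A : 'M[int]_n.+1) g k : g.2 = 0 -> (gpow A g k).1 = g.1 *+ k.
Proof.
move=> g2; elim: k => [|k IH] //=; rewrite IH g2 /= expr0 mul1mx mulrS //.
Qed.

Lemma phiMn n (w : 'rV[algC]_n.+1) u k : phi n w (u *+ k) = phi n w u *+ k.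
Proof.
elim: k => [|k IH]; first by rewrite !mulr0n phi0.
by rewrite !mulrS phiD IH.
Qed.

Theorem lemma12 (n : nat) (A : 'M[int]_n) :
  A \in unitmx ->
  irreducible_mx A ->
  (exists z : algC, `|z| = 1 /\ eigenvalue (map_mx (fun x : int => x%:~R : algC) A) z) ->
  forall (R : realType) (S : seq (G n)), gen_set A S ->
  forall g : G n, infinite_order A g -> 0 < swl A R S g.
Proof.
move=> uA irr [z [z1 /eigenvalueP [w wz wn0]]] R S gS g ginf.
destruct n as [|n].
  by move: wn0; rewrite (thinmx0 w) eqxx.
set a := fun k => wl A S (gpow A g k).
have gne : g <> gone n.+1.
  by move=> e; apply: (ginf 1%N) => //=; rewrite gmulg1.
set c : algC := if g.2 == 0 then `|phi n w g.1| else `|(g.2)%:~R : algC|.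
have c0 : 0 < c.
  rewrite /c; case: eqP => g2.
    rewrite normr_gt0; apply/eqP => /(@phi_inj n A z w wn0 wz irr _) g1.
    by apply: gne; move: g1 g2; case: (g) => ? ? /= -> ->.
  by rewrite normr_gt0 intr_eq0; apply/eqP.
have lo k : k%:R * c <= nu n w (gpow A g k).
  rewrite /c /nu; case: eqP => g2.
    rewrite gpow1 // phiMn normrMn mulr_natl lerDl normr_ge0 //.
  rewrite gpow2 (rmorphMn (intr : {rmorphism int -> algC})) normrMn mulr_natl.
  by rewrite lerDr normr_ge0.
set M := \sum_(y <- S) nu n w y.
have M0 : 0 <= M by rewrite sumr_ge0 // => *; apply: nu_ge0.
have up k : nu n w (gpow A g k) <= (a k)%:R * (M + 1).
  have [[s [hs ha he]] _] := wlP _ _ _ _ (proj2 gS (gpow A g k)).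
  rewrite -he; apply: le_trans (@nu_word n A uA z w z1 wz S s ha) _.
  by rewrite hs ler_wpM2l ?ler0n // lerDl.
have Mc0 : 0 <= (M + 1) / c by rewrite divr_ge0 // ?addr_ge0 // ltW.
set N := Num.Def.archi_bound ((M + 1) / c).
have hN := archi_boundP Mc0.
have N0 : (0 < N)%N.
  rewrite lt0n; apply/eqP => e; move: hN; rewrite -/N e.
  by move=> /(le_lt_trans Mc0); rewrite ltxx.
have lb k : (k <= N * a k)%N.
  rewrite -(ler_nat algC) natrM.
  have h := le_trans (lo k) (up k).
  rewrite -ler_pdivlMr // -mulrA in h.
  apply: le_trans h _; rewrite mulrC ler_wpM2r ?ler0n // ltW //.
rewrite /swl; apply: (@fekete_pos R a N) => //.
- by move=> p q; apply: (@wl_sub n A uA S g p q gS).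
- exact: (@wl0 n A S g gS).
Qed.
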